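(* Let $\mathcal S\subseteq\mathbb R^n$ be a convex set whose recession cone $\mathbf K:=\mathrm{rec.cone}(\mathcal S)$ is regular, and let $\Psi:=\Psi_{\mathbf K,\|\cdot\|_2}$. Then for every $\hat x\in\mathcal S$, $$\inf_{x\in\mathcal S\cap\mathbb Z^n}\|x-\hat x\|_2\le \frac{\sqrt n}{2}\Big(\frac1{\Psi}+1\Big),$$ and in fact there exists $x\in\mathcal S\cap\mathbb Z^n$ attaining $\|x-\hat x\|_2\le\frac{\sqrt n}{2}(\frac1\Psi+1)$. Moreover, if $\alpha\in\mathbb R^n$ and $\hat z:=\inf\{\alpha^Tx:x\in\mathcal S\}>-\infty$, then $$\inf\{\alpha^Tx:x\in\mathcal S\cap\mathbb Z^n\}-\hat z\le\|\alpha\|_2\frac{\sqrt n}{2}\Big(\frac1{\Psi}+1\Big).$$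
   Context: The recession cone of a convex set $\mathcal S$ is $\mathrm{rec.cone}(\mathcal S)=\{d: x+\lambda d\in\mathcal S\ \forall\lambda\ge0,\ \forall x\in\mathcal S\}$. A cone is regular if it is full-dimensional, closed, convex and pointed. For a regular cone $\mathbf K$ with dual cone $\mathbf K_*=\{x: x^Ty\ge0\ \forall y\in\mathbf K\}$, $\Psi_{\mathbf K,\|\cdot\|_2}:=\max_{d\in\mathbf K,\|d\|_2=1}\min_{f\in\mathbf K_*,\|f\|_2=1}f^Td$. *)

(* Defs.v *)
From HB Require Import structures.
From mathcomp Require Import all_boot all_order all_algebra.
From mathcomp Require Import all_classical all_reals all_analysis.
Set Implicit Arguments. Unset Strict Implicit. Unset Printing Implicit Defensive.
Import Order.TTheory GRing.Theory Num.Theory.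
Import numFieldTopology.Exports numFieldNormedType.Exports.
Local Open Scope classical_set_scope.
Local Open Scope ring_scope.

Section Defs.
Variables (R : realType) (n : nat).
Implicit Types (S K : set 'rV[R]_n) (x y d : 'rV[R]_n).

Definition dotp x y : R := \sum_(i < n) x 0 i * y 0 i.
Definition norm2 x : R := Num.sqrt (dotp x x).

Definition convexS S : Prop :=
  forall x y t, S x -> S y -> 0 <= t -> t <= 1 -> S (t *: x + (1 - t) *: y).

Definition int_vec x : Prop := forall i, x 0 i \is a Num.int.

Definition rec_cone S : set 'rV[R]_n :=
  [set d | forall x (l : R), S x -> 0 <= l -> S (x + l *: d)].

Definition is_cone K : Prop := forall x (l : R), K x -> 0 <= l -> K (l *: x).

Definition full_dim K : Prop :=
  exists x (r : R), 0 < r /\ forall y, norm2 (y - x) < r -> K y.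
Definition pointed K : Prop := forall x, K x -> K (- x) -> x = 0.
Definition regular_cone K : Prop :=
  [/\ is_cone K, full_dim K, closed K, convexS K & pointed K].

Definition dual_cone K : set 'rV[R]_n := [set f | forall y, K y -> 0 <= dotp f y].

Definition Psi K : R :=
  sup [set inf [set dotp f d | f in [set f | dual_cone K f /\ norm2 f = 1]]
      | d in [set d | K d /\ norm2 d = 1]].

End Defs.

(* Main.v *)
Require Import Defs.
From HB Require Import structures.
From mathcomp Require Import all_boot all_order all_algebra.
From mathcomp Require Import all_classical all_reals all_analysis.
From mathcomp Require Import ring lra.
Import Order.TTheory GRing.Theory Num.Theory.
Import numFieldTopology.Exports numFieldNormedType.Exports.
Local Open Scope classical_set_scope.
Local Open Scope ring_scope.
Set Implicit Arguments. Unset Strict Implicit. Unset Printing Implicit Defensive.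

Lemma dotpC (R : realType) n (x y : 'rV[R]_n) : dotp x y = dotp y x.
Proof. by apply: eq_bigr => i _; rewrite mulrC. Qed.

Lemma dotpDl (R : realType) n (x y z : 'rV[R]_n) :
  dotp (x + y) z = dotp x z + dotp y z.
Proof. by rewrite /dotp -big_split; apply: eq_bigr => i _; rewrite !mxE mulrDl. Qed.

Lemma dotpZl (R : realType) n (a : R) (x y : 'rV[R]_n) :
  dotp (a *: x) y = a * dotp x y.
Proof. by rewrite /dotp mulr_sumr; apply: eq_bigr => i _; rewrite !mxE mulrA. Qed.

Lemma dotpNl (R : realType) n (x y : 'rV[R]_n) : dotp (- x) y = - dotp x y.
Proof. by rewrite -scaleN1r dotpZl mulN1r. Qed.

Lemma dotpBl (R : realType) n (x y z : 'rV[R]_n) :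
  dotp (x - y) z = dotp x z - dotp y z.
Proof. by rewrite dotpDl dotpNl. Qed.

Lemma dotpDr (R : realType) n (x y z : 'rV[R]_n) :
  dotp z (x + y) = dotp z x + dotp z y.
Proof. by rewrite !(dotpC z) dotpDl. Qed.

Lemma dotpZr (R : realType) n (a : R) (x y : 'rV[R]_n) :
  dotp y (a *: x) = a * dotp y x.
Proof. by rewrite !(dotpC y) dotpZl. Qed.

Lemma dotpNr (R : realType) n (x y : 'rV[R]_n) : dotp y (- x) = - dotp y x.
Proof. by rewrite !(dotpC y) dotpNl. Qed.

Lemma dotpBr (R : realType) n (x y z : 'rV[R]_n) :
  dotp z (x - y) = dotp z x - dotp z y.
Proof. by rewrite dotpDr dotpNr. Qed.

Lemma dotp0l (R : realType) n (x : 'rV[R]_n) : dotp 0 x = 0.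
Proof. by rewrite /dotp big1 // => i _; rewrite mxE mul0r. Qed.

Lemma dotp0r (R : realType) n (x : 'rV[R]_n) : dotp x 0 = 0.
Proof. by rewrite dotpC dotp0l. Qed.

Lemma dotp_ge0 (R : realType) n (x : 'rV[R]_n) : 0 <= dotp x x.
Proof. by apply: sumr_ge0 => i _; rewrite -expr2 sqr_ge0. Qed.

Lemma coord_sq_le (R : realType) n (x : 'rV[R]_n) i : x 0 i ^+ 2 <= dotp x x.
Proof.
rewrite /dotp (bigD1 i) //= -expr2 lerDl; apply: sumr_ge0 => j _.
by rewrite -expr2 sqr_ge0.
Qed.

Lemma dotp_eq0 (R : realType) n (x : 'rV[R]_n) : dotp x x = 0 -> x = 0.
Proof.
move=> h; apply/rowP => i; rewrite mxE.
have := coord_sq_le x i; rewrite h => h2.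
have : x 0 i ^+ 2 = 0 by apply/eqP; rewrite eq_le h2 sqr_ge0.
by move/eqP; rewrite sqrf_eq0 => /eqP.
Qed.

Lemma norm2_ge0 (R : realType) n (x : 'rV[R]_n) : 0 <= norm2 x.
Proof. exact: sqrtr_ge0. Qed.

Lemma norm2_sq (R : realType) n (x : 'rV[R]_n) : norm2 x ^+ 2 = dotp x x.
Proof. by rewrite /norm2 sqr_sqrtr // dotp_ge0. Qed.

Lemma norm2Z (R : realType) n (a : R) (x : 'rV[R]_n) : norm2 (a *: x) = `|a| * norm2 x.
Proof.
rewrite /norm2 dotpZl dotpZr mulrA sqrtrM; last by rewrite -expr2 sqr_ge0.
by rewrite -expr2 sqrtr_sqr.
Qed.

Lemma norm20 (R : realType) n : norm2 (0 : 'rV[R]_n) = 0.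
Proof. by rewrite /norm2 dotp0l sqrtr0. Qed.

Lemma norm2N (R : realType) n (x : 'rV[R]_n) : norm2 (- x) = norm2 x.
Proof. by rewrite -scaleN1r norm2Z normrN normr1 mul1r. Qed.

Lemma norm2B (R : realType) n (x y : 'rV[R]_n) : norm2 (x - y) = norm2 (y - x).
Proof. by rewrite -norm2N opprB. Qed.

Lemma norm2_eq0 (R : realType) n (x : 'rV[R]_n) : norm2 x = 0 -> x = 0.
Proof. by move=> h; apply: dotp_eq0; rewrite -norm2_sq h expr0n. Qed.

Lemma coord_le_norm2 (R : realType) n (x : 'rV[R]_n) i : `|x 0 i| <= norm2 x.
Proof.
rewrite -(sqrtr_sqr (x 0 i)) /norm2; apply: ler_wsqrtr.
exact: coord_sq_le.
Qed.

Lemma CS (R : realType) n (x y : 'rV[R]_n) : dotp x y ^+ 2 <= dotp x x * dotp y y.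
Proof.
have [y0|yn0] := eqVneq (dotp y y) 0.
  by rewrite (dotp_eq0 y0) !dotp0r expr0n /= mulr0.
have ypos : 0 < dotp y y by rewrite lt_def yn0 dotp_ge0.
set t := dotp x y / dotp y y.
have := dotp_ge0 (x - t *: y).
rewrite dotpBl !dotpBr !dotpZl !dotpZr (dotpC y x).
have -> : t * dotp x y - t * (t * dotp y y) = 0.
  by rewrite /t; field.
rewrite subr0 subr_ge0 => h.
rewrite -(ler_pM2r ypos) in h.
have e : t * dotp x y * dotp y y = dotp x y ^+ 2 by rewrite /t; field.
by rewrite -e.
Qed.

Lemma CSn (R : realType) n (x y : 'rV[R]_n) : `|dotp x y| <= norm2 x * norm2 y.
Proof.
rewrite -(sqrtr_sqr (dotp x y)) /norm2 -sqrtrM ?dotp_ge0 //.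
by apply: ler_wsqrtr; apply: CS.
Qed.

Lemma CS1 (R : realType) n (x y : 'rV[R]_n) : dotp x y <= norm2 x * norm2 y.
Proof. exact: le_trans (ler_norm _) (CSn _ _). Qed.

Lemma norm2D (R : realType) n (x y : 'rV[R]_n) : norm2 (x + y) <= norm2 x + norm2 y.
Proof.
rewrite -(ler_pXn2r (_ : 0 < 2)%N) ?nnegrE ?addr_ge0 ?norm2_ge0 //.
rewrite norm2_sq sqrrD !norm2_sq dotpDl !dotpDr (dotpC y x).
have := CS1 x y; lra.
Qed.

Lemma lip_cont (R : realType) n (h : 'rV[R]_n -> R) (C : R) : 0 < C ->
  (forall a b, `|h a - h b| <= C * `|a - b|) -> continuous h.
Proof.
move=> C0 hl x; apply/(@cvgrPdist_le _ _ _ (nbhs x) (nbhs_filter x)) => e e0.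
have eC : 0 < e / C by rewrite divr_gt0.
have := nbhsx_ballx x (e / C) eC.
apply: filterS => y /=; rewrite mx_norm_ball /ball_ /= => hy.
apply: le_trans (hl x y) _.
rewrite -ler_pdivlMl // mulrC; exact: ltW.
Qed.

Lemma coord_le_mx (R : realType) n (x : 'rV[R]_n) i : `|x 0 i| <= `|x|.
Proof.
have /mapP[j Hj ->] : `|x 0 i| \in [seq `|x k.1 k.2| | k : 'I_1 * 'I_n].
  by apply/mapP; exists (ord0, i) => //=; rewrite mem_enum.
by rewrite (_ : `|x| = mx_norm x) // mx_normrE; apply/bigmax_geP; right => /=; exists j.
Qed.

Lemma mx_le_norm2 (R : realType) n (x : 'rV[R]_n) : `|x| <= norm2 x.
Proof.
rewrite (_ : `|x| = mx_norm x) // mx_normrE; apply: bigmax_le; first exact: norm2_ge0.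
by move=> [i j] _ /=; rewrite (ord1 i); apply: coord_le_norm2.
Qed.

Lemma norm2_le_mx (R : realType) n (x : 'rV[R]_n) :
  norm2 x <= Num.sqrt n%:R * `|x|.
Proof.
rewrite -[X in _ * X]normr_id -(sqrtr_sqr `|x|) -sqrtrM ?ler0n // /norm2; apply: ler_wsqrtr.
rewrite /dotp -[n in n%:R]card_ord -sum1_card natr_sum mulr_suml.
apply: ler_sum => i _; rewrite mul1r -expr2 -real_normK ?num_real //.
by rewrite lerXn2r ?nnegrE ?normr_ge0 // ?coord_le_mx // normr_id.
Qed.

Lemma norm2_lip (R : realType) n (a b : 'rV[R]_n) :
  `|norm2 a - norm2 b| <= norm2 (a - b).
Proof.
rewrite ler_norml; apply/andP; split.
  have := norm2D (b - a) a; rewrite subrK norm2B; lra.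
have := norm2D (a - b) b; rewrite subrK; lra.
Qed.

Lemma cont_norm2 (R : realType) n (c : 'rV[R]_n) :
  continuous (fun x : 'rV[R]_n => norm2 (x - c)).
Proof.
apply: (@lip_cont _ _ _ (Num.sqrt n%:R + 1)).
  by apply: ltr_wpDl; [exact: sqrtr_ge0 | exact: ltr01].
move=> a b; apply: le_trans (norm2_lip _ _) _.
rewrite opprB addrA subrK.
apply: le_trans (norm2_le_mx _) _.
by rewrite ler_wpM2r ?normr_ge0 // lerDl.
Qed.

Lemma cont_dotp (R : realType) n (f : 'rV[R]_n) :
  continuous (fun x : 'rV[R]_n => dotp f x).
Proof.
apply: (@lip_cont _ _ _ (norm2 f * Num.sqrt n%:R + 1)).
  by apply: ltr_wpDl; [apply: mulr_ge0; [exact: norm2_ge0|exact: sqrtr_ge0] | exact: ltr01].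
move=> a b; rewrite -dotpBr; apply: le_trans (CSn _ _) _.
rewrite mulrDl mul1r -mulrA; apply: ler_wpDr; first exact: normr_ge0.
by apply: ler_wpM2l; [exact: norm2_ge0 | exact: norm2_le_mx].
Qed.

Lemma small_t (R : realType) (a b : R) : 0 <= b ->
  (forall t, 0 < t -> t <= 1 -> 0 <= a + t * b) -> 0 <= a.
Proof.
move=> b0 h; rewrite leNgt; apply/negP => a0.
have ba : 0 < b - a by lra.
have t0 : 0 < - a / (b - a) by rewrite divr_gt0 // oppr_gt0.
have t1 : - a / (b - a) <= 1 by rewrite ler_pdivrMr // mul1r; lra.
have := h _ t0 t1.
have -> : a + - a / (b - a) * b = - (a ^+ 2) / (b - a).
  by field; rewrite gt_eqF.
rewrite pmulr_lge0 ?invr_gt0 // oppr_ge0 => h2.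
have : 0 < a ^+ 2 by rewrite exprn_even_gt0 //= lt_eqF.
lra.
Qed.

Lemma expand_q (R : realType) n (f k : 'rV[R]_n) (t : R) :
  dotp (f + t *: k) (f + t *: k) = dotp f f + t * (2 * dotp f k + t * dotp k k).
Proof.
rewrite dotpDl !dotpDr !dotpZl !dotpZr (dotpC k f); ring.
Qed.

Lemma sep (R : realType) n (K : set 'rV[R]_n) :
  closed K -> K 0 -> (forall a b, K a -> K b -> K (a + b)) ->
  (forall a l, K a -> 0 <= l -> K (l *: a)) ->
  forall y, ~ K y -> exists f, dual_cone K f /\ dotp f y < 0.
Proof.
move=> Kcl K0 KD KZ y Ky.
set A := K `&` ((fun z => norm2 (z - y)) @^-1` [set r | r <= norm2 y]).
have Acl : closed A.
  apply: closedI => //; apply: preimage_closed; last exact: closed_le.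
  by move=> z _; apply: cont_norm2.
have Abd : bounded_set A.
  exists (2 * norm2 y); split; first exact: num_real.
  move=> M hM z [_ /= hz]; apply: le_trans (mx_le_norm2 _) _.
  apply: le_trans (ltW hM).
  have := norm2D (z - y) y; rewrite subrK; lra.
have A0 : A !=set0.
  by exists 0; split => //; rewrite /= sub0r norm2N.
have [p pA pmin] := EVT_min_rV A0 (bounded_closed_compact Abd Acl)
   (continuous_subspaceT (@cont_norm2 _ _ y)).
move: pA; rewrite inE => -[Kp /= py].
have pm : forall k, K k -> norm2 (p - y) <= norm2 (k - y).
  move=> k Kk; have [kA|kA] := leP (norm2 (k - y)) (norm2 y).
    by apply: pmin; rewrite inE.
  exact: le_trans py (ltW kA).
have qm : forall k, K k -> dotp (p - y) (p - y) <= dotp (k - y) (k - y).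
  move=> k Kk; rewrite -!norm2_sq lerXn2r ?nnegrE ?norm2_ge0 //; exact: pm.
set f := p - y.
have fK : dual_cone K f.
  move=> k Kk; rewrite -(pmulr_rge0 _ (ltr0Sn R 1)).
  apply: (small_t (b := dotp k k)); first exact: dotp_ge0.
  move=> t t0 _; have := qm (p + t *: k) (KD _ _ Kp (KZ _ _ Kk (ltW t0))).
  rewrite addrAC -/f expand_q lerDl pmulr_rge0 //.
have fp : dotp f p <= 0.
  rewrite -oppr_ge0 -(pmulr_rge0 _ (ltr0Sn R 1)).
  apply: (small_t (b := dotp p p)); first exact: dotp_ge0.
  move=> t t0 t1.
  have := qm ((1 - t) *: p) (KZ _ _ Kp (_ : 0 <= 1 - t)).
  rewrite scalerBl scale1r -addrA (addrC (- _)) addrA -/f -scaleNr expand_q.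
  rewrite lerDl => h; have {h} := h ltac:(lra).
  have -> : - t * (2 * dotp f p + - t * dotp p p) =
    t * (2%:R * - dotp f p + t * dotp p p) by ring.
  by rewrite (pmulr_rge0 _ t0).
exists f; split => //.
have -> : y = p - f by rewrite /f opprB addrC subrK.
rewrite dotpBr; suff : 0 < dotp f f by lra.
rewrite lt_def dotp_ge0 andbT; apply/eqP => /dotp_eq0 f0.
by apply: Ky; move: f0; rewrite /f => /eqP; rewrite subr_eq0 => /eqP <-.
Qed.

Lemma inf_le_elt (R : realType) (E : set R) x : has_lbound E -> E x -> inf E <= x.
Proof.
move=> [l hl] Ex; rewrite /inf lerNl; apply: ub_le_sup; last by exists x.
exists (- l) => _ [y Ey <-]; rewrite lerN2; exact: hl.
Qed.

Lemma round1 (R : realType) (x : R) : exists r : R, r \is a Num.int /\ `|r - x| <= 2^-1.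
Proof.
exists (Num.floor (x + 2^-1))%:~R; split; first exact: intr_int.
have h1 := floor_le (x + 2^-1); have h2 := floorD1_gt (x + 2^-1).
rewrite intrD in h2.
rewrite ler_norml; apply/andP; split; lra.
Qed.

Lemma round_vec (R : realType) n (c : 'rV[R]_n) :
  exists z : 'rV[R]_n, int_vec z /\ norm2 (z - c) <= Num.sqrt n%:R / 2.
Proof.
have [f hf] := @choice _ _ (fun (i : 'I_n) (r : R) => r \is a Num.int /\ `|r - c 0 i| <= 2^-1) (fun i => round1 (c 0 i)).
exists (\row_i f i); split; first by move=> i; rewrite mxE; case: (hf i).
rewrite -(ler_pXn2r (_ : 0 < 2)%N) ?nnegrE ?norm2_ge0 ?divr_ge0 ?sqrtr_ge0 //.
rewrite norm2_sq expr_div_n sqr_sqrtr ?ler0n //.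
rewrite /dotp -[n in n%:R]card_ord -sum1_card natr_sum mulr_suml.
apply: ler_sum => i _; rewrite !mxE -expr2 -real_normK ?num_real //.
have [_ h] := hf i.
have : `|f i - c 0 i| ^+ 2 <= 2^-1 ^+ 2 by rewrite lerXn2r ?nnegrE ?normr_ge0 ?invr_ge0 ?ler0n.
have -> : 2^-1 ^+ 2 = 1 / 2 ^+ 2 :> R by field.
done.
Qed.

Lemma norm2_gt0 (R : realType) n (f : 'rV[R]_n) : f != 0 -> 0 < norm2 f.
Proof.
move=> f0; rewrite lt_def norm2_ge0 andbT; apply/eqP => /norm2_eq0 h.
by rewrite h eqxx in f0.
Qed.

Lemma unitize (R : realType) n (f : 'rV[R]_n) : f != 0 ->
  norm2 ((norm2 f)^-1 *: f) = 1.
Proof.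
move=> f0; have h := norm2_gt0 f0.
by rewrite norm2Z ger0_norm ?invr_ge0 ?norm2_ge0 // mulVf // gt_eqF.
Qed.

Lemma sepF (R : realType) n (K : set 'rV[R]_n) :
  closed K -> K 0 -> (forall a b, K a -> K b -> K (a + b)) ->
  (forall a l, K a -> 0 <= l -> K (l *: a)) ->
  forall y, ~ K y -> exists f, (dual_cone K f /\ norm2 f = 1) /\ dotp f y < 0.
Proof.
move=> Kcl K0 KD KZ y Ky.
have [f [fK fy]] := sep Kcl K0 KD KZ Ky.
have f0 : f != 0 by apply/eqP => f0; move: fy; rewrite f0 dotp0l ltxx.
have h := norm2_gt0 f0.
exists ((norm2 f)^-1 *: f); split; first split.
- move=> k Kk; rewrite dotpZl mulr_ge0 ?invr_ge0 ?norm2_ge0 //; exact: fK.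
- exact: unitize.
- by rewrite dotpZl pmulr_rlt0 // invr_gt0.
Qed.

Lemma ballK (R : realType) n (K : set 'rV[R]_n) :
  closed K -> K 0 -> (forall a b, K a -> K b -> K (a + b)) ->
  (forall a l, K a -> 0 <= l -> K (l *: a)) ->
  forall d (rho : R), (forall f, dual_cone K f -> norm2 f = 1 -> rho <= dotp f d) ->
  forall y, norm2 (y - d) <= rho -> K y.
Proof.
move=> Kcl K0 KD KZ d rho hd y hy.
case: (pselect (K y)) => // Ky; exfalso.
have [f [[fK f1] fy]] := sepF Kcl K0 KD KZ Ky.
have := hd f fK f1.
have := CS1 f (d - y); rewrite f1 mul1r norm2B dotpBr.
lra.
Qed.

Unset Implicit Arguments.

Lemma cont_norm2_0 (R : realType) n : continuous (@norm2 R n).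
Proof.
have -> : @norm2 R n = (fun x => norm2 (x - 0)).
  by apply: funext => x; rewrite subr0.
exact: cont_norm2.
Qed.

Lemma main_exists (R : realType) (n : nat) (S : set 'rV[R]_n) :
  regular_cone (rec_cone S) ->
  forall xh, S xh -> exists x, [/\ S x, int_vec x &
    norm2 (x - xh) <= Num.sqrt n%:R / 2 * ((Psi (rec_cone S))^-1 + 1)].
Proof.
set K := rec_cone S.
move=> [Kc Kfd Kcl Kcv Kpt] xh Sxh.
have K0 : K 0 by move=> x l Sx _; rewrite scaler0 addr0.
have KD : forall a b, K a -> K b -> K (a + b).
  by move=> a b Ka Kb x l Sx l0; rewrite scalerDr addrA; apply: Kb => //; apply: Ka.
have [n0|npos] := eqVneq n 0%N.
  exists xh; split => //.
    by move=> i; have := ltn_ord i; rewrite [X in (_ < X)%N]n0.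
  have -> : (n%:R : R) = 0 by rewrite n0.
  by rewrite subrr norm20 sqrtr0 !mul0r.
have {}npos : (0 < n)%N by rewrite lt0n.

have [y Ky] : exists y, ~ K y.
  set e : 'rV[R]_n := const_mx 1.
  case: (pselect (K e)) => Ke; last by exists e.
  case: (pselect (K (- e))) => Kne; last by exists (- e).
  have := Kpt e Ke Kne => /rowP /(_ (Ordinal npos)); rewrite !mxE => /eqP.
  by rewrite oner_eq0.
set F := [set f | dual_cone K f /\ norm2 f = 1].
have [f0 [Ff0 _]] := sepF Kcl K0 KD Kc Ky.
set g := fun d => inf [set dotp f d | f in F].
have glb : forall d, has_lbound [set dotp f d | f in F].
  move=> d; exists (- norm2 d) => _ [f [_ f1] <-].
  have := CSn f d; rewrite f1 mul1r ler_norml => /andP[]//.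
have gle : forall d f, F f -> g d <= dotp f d.
  by move=> d f Ff; apply: inf_le_elt => //; exists f.
have gge : forall d c, (forall f, F f -> c <= dotp f d) -> c <= g d.
  move=> d c hc; apply: lb_le_inf; first by exists (dotp f0 d), f0.
  by move=> _ [f Ff <-]; apply: hc.
have glip : forall a b, `|g a - g b| <= norm2 (a - b).
  have h1 : forall a b, g b - norm2 (a - b) <= g a.
    move=> a b; apply: gge => f [fK f1].
    have := gle b f (conj fK f1).
    have := CSn f (a - b); rewrite f1 mul1r ler_norml dotpBr => /andP[h _].
    lra.
  move=> a b; rewrite ler_norml; apply/andP; split.
    have := h1 a b; lra.
  have := h1 b a; rewrite norm2B; lra.
have gcont : continuous g.
  apply: (@lip_cont _ _ _ (Num.sqrt n%:R + 1)).
    by apply: ltr_wpDl; [exact: sqrtr_ge0 | exact: ltr01].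
  move=> a b; apply: le_trans (glip a b) _.
  apply: le_trans (norm2_le_mx _) _.
  by rewrite ler_wpM2r ?normr_ge0 // lerDl.
have [x0 [r [r0 hball]]] := Kfd.
have x0n : x0 != 0.
  apply/eqP => x00; apply: Ky.
  have [->|yn] := eqVneq y 0; first exact: K0.
  have ny := norm2_gt0 yn.
  have -> : y = (2 * norm2 y / r) *: ((r / (2 * norm2 y)) *: y).
    by rewrite scalerA (_ : _ * _ = 1) ?scale1r //; field; rewrite !gt_eqF.
  apply: Kc; last by apply: divr_ge0 => //; [apply: mulr_ge0; [|exact: ltW] |exact: ltW].
  apply: hball; rewrite x00 subr0 norm2Z ger0_norm; last first.
    by apply: divr_ge0; [exact: ltW | apply: mulr_ge0; [|exact: ltW]].
  have -> : r / (2 * norm2 y) * norm2 y = r / 2 by field; rewrite gt_eqF.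
  lra.
have nx0 := norm2_gt0 x0n.
set d0 := (norm2 x0)^-1 *: x0.
have Kd0 : K d0.
  apply: Kc; last by rewrite invr_ge0 norm2_ge0.
  by apply: hball; rewrite subrr norm20.

have d01 : norm2 d0 = 1 by apply: unitize.
have gd0 : r / (2 * norm2 x0) <= g d0.
  apply: gge => f [fK f1].
  have := fK (x0 - (r / 2) *: f).
  rewrite dotpBr dotpZr -norm2_sq f1 expr1n mulr1 => h.
  have {h} := h (hball _ _).
  rewrite addrAC subrr add0r norm2N norm2Z f1 mulr1 ger0_norm; last by lra.
  move=> /(_ ltac:(lra)) h.
  rewrite /d0 dotpZr.
  have -> : r / (2 * norm2 x0) = (norm2 x0)^-1 * (r / 2) by field; rewrite gt_eqF.
  by rewrite ler_pM2l ?invr_gt0 //; lra.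
have gd0p : 0 < g d0.
  apply: lt_le_trans gd0; apply: divr_gt0 => //; lra.
set D := [set d | K d /\ norm2 d = 1].
have Dcl : closed D.
  have : closed (K `&` (@norm2 R n) @^-1` [set x | x = 1]).
    apply: closedI => //; apply: preimage_closed; last exact: closed_eq.
    by move=> z _; apply: cont_norm2_0.
  by [].
have Dbd : bounded_set D.
  exists 1; split; first exact: num_real.
  move=> M hM z [_ /= hz]; apply: le_trans (mx_le_norm2 _) _.
  by rewrite hz; apply: ltW.
have D0 : D !=set0 by exists d0.
have [ds dsD dsmax] := EVT_max_rV D0 (bounded_closed_compact Dbd Dcl)
   (continuous_subspaceT gcont).
move: dsD; rewrite inE => -[Kds ds1].
have PsiE : Psi K = sup [set g d | d in D] by [].
have gub : ubound [set g d | d in D] (g ds).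
  by move=> _ [d Dd <-]; apply: dsmax; rewrite inE.
have Psile : Psi K <= g ds by rewrite PsiE; apply: ge_sup => //; exists (g d0), d0.
have Psige : g d0 <= Psi K.
  rewrite PsiE; apply: ub_le_sup; last by exists d0.
  by exists (g ds).
have Psipos : 0 < Psi K by exact: lt_le_trans gd0p Psige.
set psi := g ds.
have psipos : 0 < psi by apply: lt_le_trans Psile.
have ballds : forall z, norm2 (z - ds) <= psi -> K z.
  apply: (ballK Kcl K0 KD Kc) => f fK f1; exact: gle.
have sn : 0 < Num.sqrt (n%:R : R) by rewrite sqrtr_gt0 ltr0n.
set t := Num.sqrt n%:R / (2 * psi).
have t0 : 0 < t by apply: divr_gt0 => //; lra.
set c := xh + t *: ds.
have [z [zint zc]] := round_vec c.
have Kz : K (z - xh).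
  have -> : z - xh = t *: (t^-1 *: (z - xh)).
    by rewrite scalerA mulfV ?scale1r // gt_eqF.
  apply: Kc; last exact: ltW.
  apply: ballds.
  have -> : t^-1 *: (z - xh) - ds = t^-1 *: (z - c).
    by rewrite /c opprD addrA (scalerBr t^-1 (z - xh)) scalerA mulVf ?scale1r // gt_eqF.
  rewrite norm2Z ger0_norm; last by rewrite invr_ge0 ltW.
  have -> : psi = t^-1 * (Num.sqrt n%:R / 2) by rewrite /t; field; rewrite !gt_eqF.
  by rewrite ler_pM2l ?invr_gt0.
exists z; split => //.
  by have := Kz xh 1 Sxh ler01; rewrite scale1r addrC subrK.
have -> : z - xh = (z - c) + t *: ds by rewrite /c opprD addrA subrK.
apply: le_trans (norm2D _ _) _.
rewrite norm2Z ds1 mulr1 ger0_norm; last exact: ltW.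
have tle : t <= Num.sqrt n%:R / 2 * (Psi K)^-1.
  have -> : t = Num.sqrt n%:R / 2 * psi^-1 by rewrite /t; field; rewrite gt_eqF.
  rewrite ler_pM2l ?divr_gt0 //.
  by rewrite lef_pV2 ?posrE.
rewrite mulrDr mulr1; lra.
Qed.

Theorem theorem4p2 (R : realType) (n : nat) (S : set 'rV[R]_n) :
  convexS S -> regular_cone (rec_cone S) ->
  let bound := Num.sqrt n%:R / 2 * ((Psi (rec_cone S))^-1 + 1) in
  (forall xh, S xh ->
     inf [set norm2 (x - xh) | x in [set x | S x /\ int_vec x]] <= bound /\
     exists x, [/\ S x, int_vec x & norm2 (x - xh) <= bound]) /\
  (forall alpha : 'rV[R]_n,
     S !=set0 -> has_lbound [set dotp alpha x | x in S] ->
     inf [set dotp alpha x | x in [set x | S x /\ int_vec x]]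
       - inf [set dotp alpha x | x in S] <= norm2 alpha * bound).
Proof.
move=> _ Kreg bound.
have P1 := @main_exists _ _ _ Kreg.
split.
  move=> xh Sxh; have [x [Sx ix hx]] := P1 xh Sxh.
  split; last by exists x.
  apply: le_trans hx; apply: inf_le_elt; last by exists x.
  by exists 0 => _ [y _ <-]; apply: norm2_ge0.
move=> alpha S0 [l hl].
have E0 : [set dotp alpha x | x in S] !=set0.
  by case: S0 => x Sx; exists (dotp alpha x), x.
apply/ler_addgt0Pr => e e0.
set E := [set dotp alpha x | x in S].
have hE : inf E < inf E + e by rewrite ltrDl.
have [_ [xh Sxh <-] hxh] := inf_lt E0 hE.
have [z [Sz iz hz]] := P1 xh Sxh.
have h1 : inf [set dotp alpha x | x in [set x | S x /\ int_vec x]] <= dotp alpha z.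
  apply: inf_le_elt; last by exists z.
  by exists l => _ [y [Sy _] <-]; apply: hl; exists y.
have h2 : dotp alpha z <= dotp alpha xh + norm2 alpha * bound.
  have -> : z = xh + (z - xh) by rewrite addrC subrK.
  rewrite dotpDr lerD2l; apply: le_trans (CS1 _ _) _.
  by rewrite ler_wpM2l ?norm2_ge0.
lra.
Qed.
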